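(* Let $n>2k\geq 4$ be integers. Suppose that $\mathcal{F},\mathcal{G}\subset\binom{[n]}{k}$ are non-trivial and cross-intersecting, and assume $|\mathcal{F}(\hat{1})|\geq\binom{n-2}{k-2}$ and $|\mathcal{G}(\hat{1})|\geq\binom{n-2}{k-2}$. Then: (i) $\mathcal{F}_0\cup\mathcal{G}_1$ and $\mathcal{F}_1\cup\mathcal{G}_0$ are intersecting; (ii) if $\min\{|\mathcal{F}(\hat{1})|,|\mathcal{G}(\hat{1})|\}>\binom{n-2}{k-2}$, then $\mathcal{F}_0\cup\mathcal{G}_1$ and $\mathcal{F}_1\cup\mathcal{G}_0$ are also non-trivial.
   Context: $[n]=\{1,\ldots,n\}$, $[2,n]=\{2,\ldots,n\}$, and $\binom{X}{k}$ is the family of $k$-subsets of $X$. Families $\mathcal{F},\mathcal{G}$ are cross-intersecting if $F\cap G\neq\emptyset$ for all $F\in\mathcal{F},G\in\mathcal{G}$; a family is intersecting if any two of its members intersect; a family is non-trivial if the intersection of all its members is empty. For a family $\mathcal{H}$, $\mathcal{H}(\hat{1})=\{H\in\mathcal{H}\colon 1\in H\}$ and $\mathcal{H}(\bar{1})=\{H\in\mathcal{H}\colon 1\notin H\}$. The lexicographic order on $k$-sets is defined by $F<_L G$ iff $\min(F\setminus G)<\min(G\setminus F)$. For a ground set $X$ and $1\leq m\leq\binom{|X|}{k}$, $\mathcal{L}(X,k,m)$ denotes the family of the first $m$ sets of $\binom{X}{k}$ in lexicographic order. For $\mathcal{H}\subset\binom{[n]}{k}$, define $\mathcal{H}_1=\mathcal{L}([n],k,|\mathcal{H}(\hat{1})|)$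 and $\mathcal{H}_0=\mathcal{L}([2,n],k,|\mathcal{H}(\bar{1})|)$ (the first $|\mathcal{H}(\bar 1)|$ sets of $\binom{[2,n]}{k}$ in lexicographic order). *)

(* Defs.v *)
(* Ground set [n] = {1,...,n} is modelled by 'I_n,
   the ordinal i : 'I_n standing for the integer i+1 (order-preserving
   relabelling).  So the element "1" of the paper is the ordinal with value 0. *)
From mathcomp Require Import all_boot all_order.
Set Implicit Arguments. Unset Strict Implicit. Unset Printing Implicit Defensive.

Section Defs.
Variable n : nat.
Local Notation T := 'I_n.

Definition ground : {set T} := [set: T].
Definition ground2 : {set T} := [set x : T | nat_of_ord x != 0].

Definition ksets (X : {set T}) (k : nat) : {set {set T}} :=
  [set A : {set T} | (A \subset X) && (#|A| == k)].

Definition cross_intersecting (F G : {set {set T}}) : Prop :=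
  forall A B, A \in F -> B \in G -> A :&: B != set0.

Definition intersecting (F : {set {set T}}) : Prop := cross_intersecting F F.

Definition nontrivial (F : {set {set T}}) : Prop :=
  \bigcap_(A in F) A = set0.

Definition hat1 (H : {set {set T}}) : {set {set T}} :=
  [set A in H | [exists x in A, nat_of_ord x == 0]].
Definition bar1 (H : {set {set T}}) : {set {set T}} :=
  [set A in H | ~~ [exists x in A, nat_of_ord x == 0]].

(* lexicographic order: F <_L G iff min(F\G) < min(G\F), i.e. some element
   of F\G is smaller than every element of G\F (used on distinct k-sets,
   where both differences are non-empty). *)
Definition lexlt (A B : {set T}) : bool :=
  [exists i in A :\: B, [forall j in B :\: A, i < j]].

(* L(X,k,m): the first m sets of binom(X,k) in lexicographic order, i.e.
   those having fewer than m predecessors in binom(X,k). *)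
Definition lexfirst (X : {set T}) (k m : nat) : {set {set T}} :=
  [set A in ksets X k | #|[set B in ksets X k | lexlt B A]| < m].

Definition H1 (k : nat) (H : {set {set T}}) : {set {set T}} :=
  lexfirst ground k #|hat1 H|.
Definition H0 (k : nat) (H : {set {set T}}) : {set {set T}} :=
  lexfirst ground2 k #|bar1 H|.
End Defs.

(* Main.v *)
Require Import Defs.
From mathcomp Require Import all_boot all_order zify.
Set Implicit Arguments. Unset Strict Implicit. Unset Printing Implicit Defensive.

Section Gen.
Variable n : nat.
Local Notation T := 'I_n.
Implicit Types (A B C D E P U V W X : {set T}) (F G : {set {set T}}).

Lemma disjP A B : reflect (forall x, x \in A -> x \notin B) [disjoint A & B].
Proof.
rewrite disjoints_subset; apply: (iffP subsetP) => H x /H; by rewrite inE.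
Qed.

Lemma lexltP A B : reflect (exists2 i, i \in A :\: B & forall j, j \in B :\: A -> i < j) (lexlt A B).
Proof.
apply: (iffP exists_inP) => [[i Hi /forall_inP H]|[i Hi H]]; exists i => //.
by apply/forall_inP.
Qed.

Lemma lexlt_irr A : ~~ lexlt A A.
Proof. by apply/lexltP => -[i]; rewrite setDv inE. Qed.

Lemma lexlt_trans A B C : lexlt A B -> lexlt B C -> lexlt A C.
Proof.
move=> /lexltP [a Ha HA] /lexltP [b Hb HB].
move: Ha Hb; rewrite !inE => /andP [aB aA] /andP [bC bB].
case: (ltngtP a b) => [ab|ba|ab].
- apply/lexltP; exists a.
    rewrite !inE aA andbT; apply/negP => aC.
    have := HB a; rewrite !inE aC aB /= => /(_ isT) h.
    by move: (ltn_trans ab h); rewrite ltnn.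
  move=> j; rewrite !inE => /andP [jA jC].
  case jB: (j \in B); first by apply: HA; rewrite !inE jA jB.
  by apply: ltn_trans ab (HB j _); rewrite !inE jB jC.
- apply/lexltP; exists b.
    rewrite !inE bC /=.
    apply/negPn/negP => bA.
    have := HA b; rewrite !inE bA bB /= => /(_ isT) h.
    by move: (ltn_trans ba h); rewrite ltnn.
  move=> j; rewrite !inE => /andP [jA jC].
  case jB: (j \in B); last by apply: HB; rewrite !inE jB jC.
  by apply: ltn_trans ba (HA j _); rewrite !inE jA jB.
- have ab' : a = b by apply: val_inj.
  by move: aB; rewrite ab' bB.
Qed.

Lemma lexlt_total A B : A != B -> lexlt A B || lexlt B A.
Proof.
move=> AB.
set D := (A :\: B) :|: (B :\: A).
have [x Dx] : exists x, x \in D.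
  apply/existsP; apply: contraR AB => /existsPn H.
  apply/eqP/setP => y; have := H y; rewrite !inE.
  by case: (y \in A); case: (y \in B).
case: (arg_minnP (fun i : T => nat_of_ord i) Dx) => m Dm Hm.
have Hlt : forall j, j \in D -> j != m -> m < j.
  move=> j jD jm; rewrite ltn_neqAle Hm // andbT.
  by apply: contra jm => /eqP h; apply/eqP/val_inj.
have Dm2 : m \in D by []. move: (Dm2); rewrite /D in_setU => /orP [mD|mD].
- apply/orP; left; apply/lexltP; exists m => // j jD; apply: Hlt.
    by rewrite /D inE jD orbT.
  by apply: contraTneq jD => ->; move: mD; rewrite !inE; case: (m \in A); case: (m \in B).
- apply/orP; right; apply/lexltP; exists m => // j jD; apply: Hlt.
    by rewrite /D inE jD.
  by apply: contraTneq jD => ->; move: mD; rewrite !inE; case: (m \in A); case: (m \in B).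
Qed.


Definition moveable U V A := (U \subset A) && [disjoint V & A].
Definition comp1 U V A := if moveable U V A then A :\: U :|: V else A.
Definition cc U V F A := if comp1 U V A \in F then A else comp1 U V A.
Definition compF U V F := [set cc U V F A | A in F].
Definition compressed U V F := forall A, A \in F -> comp1 U V A \in F.
Definition Sh F (p : nat) := [set P : {set T} | (#|P| == p) && [exists A in F, P \subset A]].

Lemma comp1_inj U V A A' : moveable U V A -> moveable U V A' ->
  A :\: U :|: V = A' :\: U :|: V -> A = A'.
Proof.
move=> /andP [UA /disjP VA] /andP [UA' /disjP VA'] /setP E.
apply/setP => x; have := E x; rewrite !inE.
case xU: (x \in U); first by rewrite (subsetP UA) ?(subsetP UA').
case xV: (x \in V); first by rewrite (negbTE (VA x xV)) (negbTE (VA' x xV)).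
by rewrite /= ?andbT ?orbF; move=> ->.
Qed.

Lemma cc_inj U V F : {in F &, injective (cc U V F)}.
Proof.
move=> A A' AF A'F; rewrite /cc.
case: ifP => h1; case: ifP => h2 // E.
- by move: h2; rewrite -E AF.
- by move: h1; rewrite E A'F.
- move: h1 h2 E; rewrite /comp1.
  case: ifP => m1; last by rewrite AF.
  case: ifP => m2; last by rewrite A'F.
  by move=> _ _; apply: comp1_inj.
Qed.

Lemma card_compF U V F : #|compF U V F| = #|F|.
Proof. by rewrite card_in_imset //; apply: cc_inj. Qed.

Lemma card_move U V A : moveable U V A -> [disjoint U & V] -> #|U| = #|V| ->
  #|A :\: U :|: V| = #|A|.
Proof.
move=> /andP [UA VA] UV cUV.
rewrite cardsU cardsD (setIidPr UA).
have -> : (A :\: U) :&: V = set0.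
  apply/setP => x; rewrite !inE; apply/negP => /andP [/andP [_ xA] xV].
  by move/disjP: VA => /(_ x xV); rewrite xA.
rewrite cards0 subn0 -cUV subnK //; exact: subset_leq_card.
Qed.

Lemma comp1_id A : comp1 set0 set0 A = A.
Proof.
rewrite /comp1; case: ifP => // _.
by apply/setP => x; rewrite !inE /= ?andbT ?orbF.
Qed.

Lemma compF0 F : compF set0 set0 F = F.
Proof.
rewrite /compF -[RHS]imset_id; apply: eq_imset => A.
by rewrite /cc comp1_id; case: ifP.
Qed.

Lemma shadow_comp U V F (p : nat) : [disjoint U & V] -> #|U| = #|V| ->
  (forall V' : {set T}, V' \subset V -> #|V'| < #|V| ->
     exists2 U' : {set T}, U' \subset U & (#|U'| = #|V'| /\ compressed U' V' F)) ->
  #|Sh (compF U V F) p| <= #|Sh F p|.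
Proof.
move=> UV cUV Hyp.
have [U0|[u uU]] := set_0Vmem U.
  have V0 : V = set0 by apply/eqP; rewrite -cards_eq0 -cUV U0 cards0.
  by rewrite U0 V0 compF0.
rewrite -(card_compF U V (Sh F p)); apply: subset_leq_card.
apply/subsetP => B; rewrite inE => /andP [/eqP cB /exists_inP [A AC BA]].
move: AC => /imsetP [A1 A1F ->] in BA.
have F1 : B \in Sh F p -> comp1 U V B \in Sh F p.
  move=> BS; rewrite /comp1; case: ifP => mB; last by [].
  move: (mB) => /andP [UB VB].
  have h1 : comp1 U V A1 \in F.
    move: BA; rewrite /cc; case: ifP => // h.
    rewrite /comp1; case: ifP => mA; last by move: h; rewrite /comp1 mA A1F.
    move=> /subsetP /(_ u (subsetP UB u uU)); rewrite !inE uU /=.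
    by move/disjP: UV => /(_ u uU) /negbTE ->.
  have e1 : cc U V F A1 = A1 by rewrite /cc h1.
  rewrite e1 in BA.
  have UA : U \subset A1 by apply: subset_trans BA.
  have [U' U'U [_ cU']] : exists2 U' : {set T}, U' \subset U &
      (#|U'| = #|V :\: A1| /\ comp1 U' (V :\: A1) A1 \in F).
    case: (boolP [disjoint V & A1]) => dVA.
      have -> : V :\: A1 = V.
        apply/setP => x; rewrite !inE; case xV: (x \in V); rewrite ?andbT ?andbF //.
        by move/disjP: dVA => /(_ x xV).
      by exists U.
    have lt : #|V :\: A1| < #|V|.
      apply: proper_card; apply/properP; split; first exact: subsetDl.
      move: dVA; rewrite disjoints_subset => /subsetPn [x xV xA].
      by exists x; rewrite // !inE; move: xA; rewrite inE negbK => ->.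
    have [U' U'U [cU' cmp]] := Hyp (V :\: A1) (subsetDl _ _) lt.
    by exists U' => //; split => //; apply: cmp.
  rewrite inE card_move // cB eqxx /=.
  apply/exists_inP; exists (comp1 U' (V :\: A1) A1) => //.
  have mv : moveable U' (V :\: A1) A1.
    rewrite /moveable (subset_trans U'U UA) /=.
    by apply/disjP => x; rewrite inE => /andP [].
  rewrite /comp1 mv; apply/subsetP => x; rewrite !inE => /orP [/andP [xU xB]|xV].
    rewrite (subsetP BA x xB) andbT; apply/orP; left.
    by apply: contra xU; exact: (subsetP U'U).
  case xA: (x \in A1); rewrite /= ?xV ?orbT // orbF.
  rewrite andbT; apply/negP => /(subsetP U'U) xU.
  by move/disjP: UV => /(_ x xU); rewrite xV.
case: (boolP (B \in Sh F p)) => BS.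
  by apply/imsetP; exists B => //; rewrite /cc F1.
have [D DS cD] : exists2 D, D \in Sh F p & comp1 U V D = B.
  move: BA; rewrite /cc; case: ifP => h.
    move=> BA1; case/negP: BS; rewrite inE cB eqxx; apply/exists_inP.
    by exists A1.
  rewrite /comp1; case: ifP => mA; last by move: h; rewrite /comp1 mA A1F.
  move=> BA; move: (mA) => /andP [UA1 VA1].
  have UB : [disjoint U & B].
    apply/disjP => x xU; apply/negP => /(subsetP BA); rewrite !inE xU /=.
    by move/disjP: UV => /(_ x xU) /negbTE ->.
  case: (boolP (V \subset B)) => VB.
    have mD : moveable U V (B :\: V :|: U).
      rewrite /moveable subsetUr /=; apply/disjP => x xV; rewrite !inE xV /=.
      apply/negP => xU; move/disjP: UV => /(_ x xU); by rewrite xV.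
    exists (B :\: V :|: U).
      rewrite inE card_move //; last by rewrite disjoint_sym.
        rewrite cB eqxx /=; apply/exists_inP; exists A1 => //.
        apply/subsetP => x; rewrite !inE => /orP [/andP [xV xB]|xU].
          by move: (subsetP BA x xB); rewrite !inE (negbTE xV) orbF => /andP [_ ->].
        exact: (subsetP UA1).
      by rewrite /moveable VB.
    rewrite /comp1 mD; apply/setP => x; rewrite !inE.
    case xV: (x \in V); first by rewrite orbT (subsetP VB).
    case xU: (x \in U); rewrite /= ?andbF ?andbT ?orbF //.
    by move/disjP: UB => /(_ x xU) /negbTE ->.
  have lt : #|V :&: B| < #|V|.
    apply: proper_card; apply/properP; split; first exact: subsetIl.
    move/subsetPn: VB => [x xV xB]; exists x => //.
    by rewrite inE (negbTE xB) andbF.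
  have [U' U'U [_ cmp]] := Hyp (V :&: B) (subsetIl _ _) lt.
  have := cmp A1 A1F; rewrite /comp1.
  have -> : moveable U' (V :&: B) A1.
    rewrite /moveable (subset_trans U'U UA1) /=.
    apply/disjP => x; rewrite inE => /andP [xV _].
    by move/disjP: VA1 => /(_ x xV).
  move=> HF; case/negP: BS; rewrite inE cB eqxx; apply/exists_inP.
  exists (A1 :\: U' :|: V :&: B) => //.
  apply/subsetP => x xB; move: (subsetP BA x xB); rewrite !inE xB andbT.
  case/orP => [/andP [xU xA]|->]; last by rewrite orbT.
  rewrite xA andbT; apply/orP; left; apply: contra xU; exact: (subsetP U'U).
by apply/imsetP; exists D => //; rewrite /cc cD (negbTE BS).
Qed.


Lemma subset_card A m : m <= #|A| -> exists2 S : {set T}, S \subset A & #|S| = m.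
Proof.
elim: m => [|m IH] h; first by exists set0; rewrite ?sub0set ?cards0.
have [S SA cS] := IH (ltnW h).
have [x xA] : exists x, x \in A :\: S.
  apply/set0Pn; rewrite -cards_eq0 cardsD (setIidPr SA) cS.
  by rewrite -lt0n subn_gt0.
move: xA; rewrite inE => /andP [xS xA].
exists (x |: S); first by rewrite subUset sub1set xA SA.
by rewrite cardsU1 xS cS.
Qed.

Definition upclosed X r G := forall A B, A \in G -> B \in ksets X r -> lexlt A B -> B \in G.
Definition rk A := #|[set B | lexlt A B]|.
Definition Phi G := \sum_(A in G) rk A.

Lemma rk_lt A C : lexlt A C -> rk C < rk A.
Proof.
move=> AC; apply: proper_card; apply/properP; split.
  by apply/subsetP => B; rewrite !inE => /(lexlt_trans AC).
by exists C; rewrite !inE ?AC // lexlt_irr.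
Qed.

Lemma lexlt_comp1 U V A : moveable U V A -> [disjoint U & V] -> lexlt U V ->
  lexlt A (comp1 U V A).
Proof.
move=> mA UV /lexltP [u uU Hu]; rewrite /comp1 mA.
move: mA => /andP [UA /disjP VA].
move: uU; rewrite inE => /andP [uV uU].
apply/lexltP; exists u.
  by rewrite !inE uU (negbTE uV) (subsetP UA).
move=> j; rewrite !inE => /andP [jA' /orP [/andP [_ jA]|jV]]; first by rewrite jA in jA'.
apply: Hu; rewrite !inE jV andbT; apply/negP => jU.
by move/disjP: UV => /(_ j jU); rewrite jV.
Qed.

Lemma rk_cc U V F A : [disjoint U & V] -> lexlt U V -> rk (cc U V F A) <= rk A.
Proof.
move=> UV lUV; rewrite /cc; case: ifP => // _.
case mA: (moveable U V A); last by rewrite /comp1 mA.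
by apply: ltnW; apply: rk_lt; apply: lexlt_comp1.
Qed.

Lemma Phi_lt U V G : [disjoint U & V] -> lexlt U V ->
  ~~ [forall A in G, comp1 U V A \in G] -> Phi (compF U V G) < Phi G.
Proof.
move=> UV lUV /forall_inPn [A0 A0G nA0].
rewrite /Phi /compF big_imset /=; last exact: cc_inj.
rewrite (bigD1 A0) //= [X in _ < X](bigD1 A0) //= -addSn.
apply: leq_add.
  rewrite /cc (negbTE nA0); apply: rk_lt; apply: lexlt_comp1 => //.
  case mA: (moveable U V A0) => //.
  by move: nA0; rewrite /comp1 mA A0G.
by apply: leq_sum => A _; apply: rk_cc.
Qed.

Lemma comp1_ksets X r U V A : V \subset X -> [disjoint U & V] -> #|U| = #|V| ->
  A \in ksets X r -> comp1 U V A \in ksets X r.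
Proof.
move=> VX UV cUV; rewrite /comp1; case: ifP => // mA.
rewrite !inE => /andP [AX /eqP cA].
rewrite card_move // cA eqxx andbT subUset VX andbT.
exact: subset_trans (subsetDl _ _) AX.
Qed.

Lemma compF_ksets X r U V G : V \subset X -> [disjoint U & V] -> #|U| = #|V| ->
  G \subset ksets X r -> compF U V G \subset ksets X r.
Proof.
move=> VX UV cUV GK; apply/subsetP => B /imsetP [A AG ->].
rewrite /cc; case: ifP => _; first exact: (subsetP GK).
by apply: comp1_ksets => //; apply: (subsetP GK).
Qed.

Definition goodb X U V := [&& U \subset X, V \subset X, [disjoint U & V],
  #|U| == #|V| & lexlt U V].

Lemma KK X r p F : F \subset ksets X r -> exists G, [/\ G \subset ksets X r,
  #|G| = #|F|, #|Sh G p| <= #|Sh F p| & upclosed X r G].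
Proof.
move=> FK.
pose P N := [exists G : {set {set T}}, [&& G \subset ksets X r, #|G| == #|F|,
   #|Sh G p| <= #|Sh F p| & Phi G == N]].
have exP : exists N, P N.
  by exists (Phi F); apply/existsP; exists F; rewrite FK !eqxx leqnn.
case: (ex_minnP exP) => N /existsP [G /and4P [GK /eqP cG sG /eqP PhiG]] minN.
have cmp : forall s U V, #|U| = s -> goodb X U V -> [forall A in G, comp1 U V A \in G].
  elim/ltn_ind => s IH U V cU /and5P [UX VX UV /eqP cUV lUV].
  apply/negPn/negP => nc.
  have Hyp : forall V' : {set T}, V' \subset V -> #|V'| < #|V| ->
     exists2 U' : {set T}, U' \subset U & (#|U'| = #|V'| /\ compressed U' V' G).
    move=> V' V'V ltV'.
    have [V'0|[v vV']] := set_0Vmem V'.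
      exists set0; rewrite ?sub0set ?V'0 ?cards0 //; split => // A AG.
      by rewrite comp1_id.
    move: (lUV) => /lexltP [u0 u0U Hu0].
    move: u0U; rewrite inE => /andP [u0V u0U].
    have [S SU cS] : exists2 S : {set T}, S \subset U :\ u0 & #|S| = (#|V'|).-1.
      apply: subset_card; have := cardsD1 u0 U; rewrite u0U cUV => h.
      by move: ltV'; rewrite h add1n ltnS => h2; exact: leq_trans (leq_pred _) h2.
    have u0S : u0 \notin S by apply/negP => /(subsetP SU); rewrite !inE eqxx.
    have SU' : S \subset U by apply: subset_trans SU (subsetDl _ _).
    have U'U : u0 |: S \subset U by rewrite subUset sub1set u0U SU'.
    have cU' : #|u0 |: S| = #|V'|.
      rewrite cardsU1 u0S cS add1n prednK // card_gt0; apply/set0Pn; exists v.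
      done.
    exists (u0 |: S) => //; split => // A AG.
    have hlt : #|u0 |: S| < s by rewrite cU' -cU cUV.
    have hg : goodb X (u0 |: S) V'.
      rewrite /goodb (subset_trans U'U UX) (subset_trans V'V VX) cU' eqxx /=.
      apply/andP; split.
        apply/disjP => x /(subsetP U'U) xU; apply/negP => /(subsetP V'V) xV.
        by move/disjP: UV => /(_ x xU); rewrite xV.
      apply/lexltP; exists u0.
        rewrite !inE eqxx /= andbT; apply/negP => /(subsetP V'V); by rewrite (negbTE u0V).
      move=> j; rewrite inE => /andP [_ /(subsetP V'V) jV].
      apply: Hu0; rewrite !inE jV andbT; apply/negP => jU.
      by move/disjP: UV => /(_ j jU); rewrite jV.
    by move: (IH _ hlt (u0 |: S) V' erefl hg) => /forall_inP /(_ A AG).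
  have := minN (Phi (compF U V G)).
  have -> : P (Phi (compF U V G)).
    apply/existsP; exists (compF U V G).
    rewrite (compF_ksets VX UV cUV GK) card_compF cG eqxx eqxx /= andbT.
    apply: leq_trans sG; exact: shadow_comp.
  move=> /(_ isT); rewrite leqNgt -PhiG.
  by rewrite (Phi_lt UV lUV nc).
exists G; split => // A B AG BK lAB.
have AK := subsetP GK A AG.
move: AK BK; rewrite !inE => /andP [AX /eqP cA] /andP [BX /eqP cB].
have g : goodb X (A :\: B) (B :\: A).
  rewrite /goodb (subset_trans (subsetDl _ _) AX) (subset_trans (subsetDl _ _) BX) /=.
  rewrite !cardsD cA cB setIC eqxx /=.
  apply/andP; split.
    by apply/disjP => x; rewrite !inE => /andP [xB _]; rewrite (negbTE xB) andbF.
  move/lexltP: lAB => [i iAB Hi]; apply/lexltP; exists i.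
    by move: iAB; rewrite !inE; case: (i \in A); case: (i \in B).
  by move=> j; rewrite inE => /andP [_ ]; apply: Hi.
have /forall_inP /(_ A AG) := cmp _ _ _ erefl g.
have -> : comp1 (A :\: B) (B :\: A) A = B; last by [].
rewrite /comp1.
have -> : moveable (A :\: B) (B :\: A) A.
  by rewrite /moveable subsetDl /=; apply/disjP => x; rewrite inE => /andP [].
apply/setP => x; rewrite !inE.
by case: (x \in A); case: (x \in B).
Qed.


Definition downclosed X (r : nat) (D : {set {set T}}) := forall A B, A \in D -> B \in ksets X r -> lexlt B A -> B \in D.

Lemma lexfirst_sub X (r m : nat) (D : {set {set T}}) : D \subset ksets X r -> downclosed X r D -> m <= #|D| ->
  lexfirst X r m \subset D.
Proof.
move=> DK dc mD; apply/subsetP => C; rewrite inE => /andP [CK ltm].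
apply/negPn/negP => CD.
have : #|D| <= #|[set B in ksets X r | lexlt B C]|.
  apply: subset_leq_card; apply/subsetP => E ED.
  rewrite inE (subsetP DK E ED) /=.
  have EC : E != C by apply: contraNneq CD => <-.
  case/orP: (lexlt_total EC) => // CE.
  by move: CD; rewrite (dc E C ED CK CE).
by move=> h; move: (leq_trans mD h); rewrite leqNgt ltm.
Qed.

Lemma compl_inj X B1 B2 : B1 \subset X -> B2 \subset X -> X :\: B1 = X :\: B2 -> B1 = B2.
Proof.
move=> /subsetP h1 /subsetP h2 /setP E; apply/setP => x; have := E x; rewrite !inE.
case x1: (x \in B1); case x2: (x \in B2) => //=.
  by rewrite (h1 x x1).
by rewrite (h2 x x2).
Qed.

Lemma card_compl X B : B \subset X -> #|X :\: B| = #|X| - #|B|.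
Proof. by move=> BX; rewrite cardsD (setIidPr BX). Qed.

Lemma compl_compl X B : B \subset X -> X :\: (X :\: B) = B.
Proof.
move=> /subsetP h; apply/setP => x; rewrite !inE.
by case xB: (x \in B); [rewrite (h x xB) | case: (x \in X)].
Qed.

Lemma lexlt_compl X A B : A \subset X -> B \subset X -> lexlt A B ->
  lexlt (X :\: B) (X :\: A).
Proof.
move=> /subsetP AX /subsetP BX /lexltP [i iAB Hi]; apply/lexltP; exists i.
  move: iAB; rewrite !inE => /andP [iB iA]; by rewrite iB iA (AX i iA).
move=> j; rewrite !inE => /andP [h /andP [jA jX]]; move: h; rewrite jX andbT negbK => jB.
by apply: Hi; rewrite !inE jA jB.
Qed.

Lemma sh_up X r p G P' P : G \subset ksets X r -> upclosed X r G -> p <= r ->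
  P' \in Sh G p -> P \in ksets X p -> lexlt P' P -> P \in Sh G p.
Proof.
move=> GK up pr; rewrite inE => /andP [_ /exists_inP [E EG P'E]].
move=> PK lPP; move: (PK); rewrite inE => /andP [PX /eqP cP].
move: (subsetP GK E EG); rewrite inE => /andP [EX /eqP cE].
rewrite inE cP eqxx /=; apply/exists_inP.
have [V0|[v vV]] := set_0Vmem (P :\: E).
  exists E => //; apply/subsetP => x xP; apply/negPn/negP => xE.
  by have := in_set0 x; rewrite -V0 inE xE xP.
move/lexltP: lPP => [i iP Hi].
move: iP; rewrite inE => /andP [iP iP'].
have iE : i \in E by apply: (subsetP P'E).
have leV : #|P :\: E| <= #|E :\: P|.
  by rewrite !cardsD cE cP setIC leq_sub2r.
have [S SE cS] : exists2 S : {set T}, S \subset (E :\: P) :\ i & #|S| = #|P :\: E|.-1.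
  apply: subset_card; have := cardsD1 i (E :\: P); rewrite inE iP iE add1n => h.
  by rewrite -subn1 leq_subLR add1n -h.
have SEP : S \subset E :\: P by apply: subset_trans SE (subsetDl _ _).
set U := i |: S; set V := P :\: E.
have UEP : U \subset E :\: P by rewrite subUset sub1set inE iP iE SEP.
have iS : i \notin S by apply/negP => /(subsetP SE); rewrite !inE eqxx.
have cU : #|U| = #|V|.
  rewrite /U cardsU1 iS cS add1n prednK // card_gt0; apply/set0Pn; by exists v.
have UV : [disjoint U & V].
  apply/disjP => x /(subsetP UEP); rewrite !inE => /andP [xP _].
  by rewrite (negbTE xP) andbF.
have mE : moveable U V E.
  rewrite /moveable (subset_trans UEP (subsetDl _ _)) /=.
  by apply/disjP => x; rewrite inE => /andP [].
have lUV : lexlt U V.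
  apply/lexltP; exists i.
    by rewrite /U /V !inE eqxx /= (negbTE iP) andbF.
  move=> j; rewrite /U /V inE => /andP [_]; rewrite inE => /andP [jE jP].
  apply: Hi; rewrite inE jP andbT; apply: contra jE; exact: (subsetP P'E).
have E'K : comp1 U V E \in ksets X r.
  apply: comp1_ksets => //; first by apply: subset_trans (subsetDl _ _) PX.
  exact: (subsetP GK).
exists (comp1 U V E); first exact: (up E _ EG E'K (lexlt_comp1 mE UV lUV)).
rewrite /comp1 mE; apply/subsetP => x xP; rewrite !inE.
case xE: (x \in E); last by rewrite xP orbT.
rewrite andbT /= orbF; apply/negP => h.
have xU : x \in U by rewrite /U in_setU1.
by move: (subsetP UEP x xU); rewrite !inE xP.
Qed.

Lemma hilton X p q (A B : {set {set T}}) : A \subset ksets X p -> B \subset ksets X q ->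
  cross_intersecting A B -> p + q <= #|X| ->
  cross_intersecting (lexfirst X p #|A|) (lexfirst X q #|B|).
Proof.
move=> AK BK cAB pqN.
set N := #|X|.
set Bc := [set X :\: Bm | Bm in B].
have BcK : Bc \subset ksets X (N - q).
  apply/subsetP => E /imsetP [Bm BmB ->]; move: (subsetP BK Bm BmB).
  rewrite !inE => /andP [BmX /eqP cBm]; by rewrite subsetDl card_compl // cBm eqxx.
have cBc : #|Bc| = #|B|.
  rewrite card_in_imset // => B1 B2 B1B B2B; apply: compl_inj.
  - by move: (subsetP BK B1 B1B); rewrite inE => /andP [].
  - by move: (subsetP BK B2 B2B); rewrite inE => /andP [].
have [G [GK cG sG up]] := KK p BcK.
have ShK : forall (H : {set {set T}}) (r : nat), H \subset ksets X r -> Sh H p \subset ksets X p.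
  move=> H r HK; apply/subsetP => P; rewrite !inE => /andP [-> /exists_inP [E EH PE]].
  move: (subsetP HK E EH); rewrite inE => /andP [EX _].
  by rewrite (subset_trans PE EX).
have disA : A :&: Sh Bc p = set0.
  apply/setP => P; rewrite !inE; apply/negP => /andP [PA /andP [_ /exists_inP [E]]].
  move=> /imsetP [Bm BmB ->] PXB.
  have := cAB P Bm PA BmB; apply/negP; rewrite negbK; apply/eqP/setP => x.
  rewrite !inE; apply/negP => /andP [xP xB].
  by move: (subsetP PXB x xP); rewrite !inE xB.
have szA0 : #|A| + #|Sh Bc p| <= #|ksets X p|.
  have := cardsU A (Sh Bc p); rewrite disA cards0 subn0 => <-.
  by apply: subset_leq_card; rewrite subUset AK (ShK _ _ BcK).
have szA : #|A| + #|Sh G p| <= #|ksets X p|.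
  exact: leq_trans (leq_add (leqnn _) sG) szA0.
set J := ksets X p :\: Sh G p.
have cJ : #|A| <= #|J|.
  rewrite /J cardsD (setIidPr (ShK _ _ GK)).
  rewrite leq_subRL; first by rewrite addnC. by apply: leq_trans (leq_addl _ _) szA.
set Bs := [set X :\: E | E in G].
have GX : forall E, E \in G -> E \subset X.
  by move=> E /(subsetP GK); rewrite inE => /andP [].
have cBs : #|Bs| = #|B|.
  rewrite card_in_imset ?cG // => E1 E2 E1G E2G; apply: compl_inj; exact: GX.
have BsK : Bs \subset ksets X q.
  apply/subsetP => Q /imsetP [E EG ->]; move: (subsetP GK E EG).
  rewrite !inE => /andP [EX /eqP cE]; rewrite subsetDl card_compl // cE.
  by rewrite subKn ?eqxx // /N; apply: leq_trans pqN; rewrite leq_addl.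
have dBs : downclosed X q Bs.
  move=> Q Q' /imsetP [E EG ->] Q'K lQ.
  move: (Q'K); rewrite inE => /andP [Q'X /eqP cQ'].
  have l2 := lexlt_compl Q'X (subsetDl X E) lQ.
  rewrite compl_compl ?GX // in l2.
  have K' : X :\: Q' \in ksets X (N - q) by rewrite inE subsetDl card_compl // cQ' eqxx.
  apply/imsetP; exists (X :\: Q'); first exact: up l2.
  by rewrite compl_compl.
have JK : J \subset ksets X p by apply: subsetDl.
have dJ : downclosed X p J.
  move=> P P' PJ P'K lP; rewrite inE P'K andbT; apply/negP => P'S.
  move: PJ; rewrite inE => /andP [/negP PS PK]; apply: PS.
  apply: (sh_up GK up _ P'S PK lP).
  by rewrite /N leq_subRL ?(leq_trans _ pqN) ?leq_addl // addnC.
have s1 := lexfirst_sub JK dJ cJ.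
have s2 := lexfirst_sub BsK dBs (eq_leq (esym cBs)).
move=> P Q /(subsetP s1) PJ /(subsetP s2) /imsetP [E EG ->].
apply/negP => /eqP PE0.
move: PJ; rewrite inE => /andP [nS PK]; case/negP: nS.
move: PK; rewrite !inE => /andP [PX ->] /=.
apply/exists_inP; exists E => //; apply/subsetP => x xP.
apply/negPn/negP => xE.
have : x \in P :&: (X :\: E) by rewrite !inE xP xE (subsetP PX).
by rewrite PE0 inE.
Qed.
End Gen.

Section Main.
Variable n : nat.
Local Notation T := 'I_n.
Implicit Types (A B C D E P U V W X S R Y : {set T}) (F G : {set {set T}}).
Variables (z w : T).
Hypotheses (hz : val z = 0) (hw : val w = 1).

Lemma zw : z != w.
Proof. by rewrite -val_eqE hz hw. Qed.

Lemma inX x : (x \in ground2 n) = (x != z).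
Proof. by rewrite inE -val_eqE hz. Qed.

Lemma X_eq : ground2 n = [set~ z].
Proof. by apply/setP => x; rewrite inX !inE. Qed.

Lemma cardX : #|ground2 n| = n.-1.
Proof. by rewrite X_eq cardsC1 card_ord. Qed.

Lemma ex0 A : [exists x in A, nat_of_ord x == 0] = (z \in A).
Proof.
apply/exists_inP/idP => [[x xA /eqP h]|zA]; last by exists z; rewrite ?hz.
by have -> : z = x by apply: val_inj; rewrite /= h hz.
Qed.

Lemma in_hat1 A H : (A \in hat1 H) = (A \in H) && (z \in A).
Proof. by rewrite inE ex0. Qed.

Lemma in_bar1 A H : (A \in bar1 H) = (A \in H) && (z \notin A).
Proof. by rewrite inE ex0. Qed.

Definition lk A := #|[set B | lexlt B A]|.

Lemma lk_lt A C : lexlt A C -> lk A < lk C.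
Proof.
move=> AC; apply: proper_card; apply/properP; split.
  by apply/subsetP => B; rewrite !inE => /lexlt_trans; apply.
by exists A; rewrite !inE ?AC // lexlt_irr.
Qed.

Lemma pred_lt X r C (W : {set {set T}}) : C \in W ->
  (forall B, B \in ksets X r -> lexlt B C -> B \in W) ->
  #|[set B in ksets X r | lexlt B C]| < #|W|.
Proof.
move=> CW H; apply: proper_card; apply/properP; split.
  by apply/subsetP => B; rewrite inE => /andP [BK lBC]; apply: H.
by exists C; rewrite // inE (negbTE (lexlt_irr C)) andbF.
Qed.

Lemma pred_le X r C (W : {set {set T}}) :
  (forall B, B \in ksets X r -> lexlt B C -> B \in W) ->
  #|[set B in ksets X r | lexlt B C]| <= #|W|.
Proof.
move=> H; apply: subset_leq_card.
by apply/subsetP => B; rewrite inE => /andP [BK lBC]; apply: H.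
Qed.

Lemma card_containing (Y : {set T}) (a : T) (r : nat) : a \in Y ->
  #|[set S in ksets Y r.+1 | a \in S]| <= 'C(#|Y|.-1, r).
Proof.
move=> aY.
apply: (@leq_trans #|[set a |: R | R in ksets (Y :\ a) r]|).
  apply: subset_leq_card; apply/subsetP => S; rewrite !inE => /andP [/andP [SY /eqP cS] aS].
  apply/imsetP; exists (S :\ a); last by rewrite setD1K.
  rewrite !inE; apply/andP; split; first by apply: setSD.
  by move: (cardsD1 a S); rewrite aS cS add1n => -[<-].
apply: leq_trans (leq_imset_card _ _) _.
by rewrite /ksets cards_draws (cardsD1 a Y) aY add1n.
Qed.


Lemma XnotZ B : B \subset ground2 n -> z \notin B.
Proof. by move=> /subsetP h; apply/negP => /h; rewrite inX eqxx. Qed.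

Lemma H1_prop k G C : G \subset ksets [set: T] k -> 1 <= k -> C \in H1 k G ->
  z \in C /\ C :\ z \in lexfirst (ground2 n) k.-1 #|hat1 G|.
Proof.
move=> GK k1; rewrite inE => /andP [CK lt].
move: (CK); rewrite inE => /andP [_ /eqP cC].
have zC : z \in C.
  apply/negPn/negP => zC; move: lt; rewrite ltnNge => /negP; apply.
  apply: subset_leq_card; apply/subsetP => A; rewrite in_hat1 => /andP [AG zA].
  rewrite inE (subsetP GK A AG) /=; apply/lexltP; exists z; first by rewrite inE zC zA.
  move=> j; rewrite inE => /andP [jA jC].
  have : j != z by apply: contraNneq zC => <-.
  rewrite -val_eqE hz /= => h; apply/ltP; apply/leP; rewrite hz lt0n; exact: h.
split => //; rewrite inE; apply/andP; split.
  rewrite inE; apply/andP; split.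
    by apply/subsetP => x; rewrite in_setD1 inX => /andP [].
  by move: (cardsD1 z C); rewrite zC cC add1n => ->.
apply: leq_ltn_trans lt.
set PX := [set B in ksets (ground2 n) k.-1 | lexlt B (C :\ z)].
have inj : {in PX &, injective (fun B => z |: B)}.
  move=> B1 B2; rewrite !inE => /andP [/andP [B1X _] _] /andP [/andP [B2X _] _] E.
  by rewrite -(setU1K (XnotZ B1X)) -(setU1K (XnotZ B2X)) E.
rewrite -(card_in_imset inj); apply: subset_leq_card.
apply/subsetP => B' /imsetP [B]; rewrite !inE => /andP [/andP [BX /eqP cB] lB] ->.
rewrite subsetT cardsU1 (XnotZ BX) cB /= add1n prednK // eqxx /=.
move/lexltP: lB => [i iB Hi]; apply/lexltP; exists i.
  move: iB; rewrite !inE => /andP [iC iB].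
  have iz : i != z by apply: contraTneq iB => ->; exact: XnotZ BX.
  by rewrite iB orbT andbT; move: iC; rewrite iz.
move=> j; rewrite !inE negb_or => /andP [/andP [jz jB] jC].
by apply: Hi; rewrite !inE jz jB jC.
Qed.


Lemma lex_z B S : z \in S -> lexlt B S -> z \in B.
Proof.
move=> zS /lexltP [i iBS Hi]; apply/negPn/negP => zB.
have := Hi z; rewrite !inE zS zB /= => /(_ isT).
by rewrite ltnNge hz.
Qed.

Lemma lex_w B S : w \in S -> lexlt B S -> (z \in B -> z \in S) -> w \in B.
Proof.
move=> wS /lexltP [i iBS Hi] hzB; apply/negPn/negP => wB.
have := Hi w; rewrite !inE wS wB /= => /(_ isT); rewrite hw ltnS leqn0 => /eqP i0.
have iz : i = z by apply: val_inj; rewrite /= i0 hz.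
move: iBS; rewrite iz !inE => /andP [zS zB].
by move: (hzB zB); rewrite (negbTE zS).
Qed.

Lemma W1_card k : 2 <= k -> 1 < n ->
  #|[set S in ksets (ground2 n) k.-1 | w \in S]| <= 'C(n - 2, k - 2).
Proof.
move=> k2 n1.
have e : k.-1 = (k - 2).+1 by lia.
rewrite e; apply: leq_trans (card_containing _ _) _; first by rewrite inX eq_sym zw.
by rewrite cardX; have -> : n.-1.-1 = n - 2 by lia.
Qed.

Lemma W2_card k : 2 <= k -> 1 < n ->
  #|[set S in ksets [set: T] k | (z \in S) && (w \in S)]| <= 'C(n - 2, k - 2).
Proof.
move=> k2 n1; apply: leq_trans (W1_card k2 n1).
apply: (@leq_trans #|[set z |: R | R in [set S in ksets (ground2 n) k.-1 | w \in S]]|);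
  last exact: leq_imset_card.
apply: subset_leq_card; apply/subsetP => S; rewrite !inE => /andP [/andP [_ /eqP cS] /andP [zS wS]].
apply/imsetP; exists (S :\ z); last by rewrite setD1K.
rewrite inE; apply/andP; split; last by rewrite in_setD1 eq_sym zw wS.
rewrite inE; apply/andP; split; first by apply/subsetP => x; rewrite in_setD1 inX => /andP [].
by move: (cardsD1 z S); rewrite zS cS add1n => ->.
Qed.


Lemma cardC' A : #|~: A| = n - #|A|.
Proof. have := cardsC A; rewrite card_ord; lia. Qed.

Lemma meet_sub A A2 B B2 : A \subset A2 -> B \subset B2 -> A :&: B != set0 -> A2 :&: B2 != set0.
Proof.
move=> AA BB /set0Pn [x]; rewrite inE => /andP [xA xB]; apply/set0Pn; exists x.
by rewrite inE (subsetP AA x xA) (subsetP BB x xB).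
Qed.

Lemma lexfirst_ne X r m C0 : 0 < m -> C0 \in ksets X r -> exists C, C \in lexfirst X r m.
Proof.
move=> m0 C0K; case: (arg_minnP lk C0K) => C CK Hmin; exists C.
have CK2 : C \in ksets X r by []. rewrite inE CK2 /=; apply: leq_trans m0; rewrite ltnS leqn0 cards_eq0.
apply/eqP/setP => B; rewrite in_set0 inE; apply/negP => /andP [BK lBC].
by have := Hmin B BK; rewrite leqNgt (lk_lt lBC).
Qed.

Lemma main_dir k F G : 2 <= k -> 2 * k < n ->
  F \subset ksets [set: T] k -> G \subset ksets [set: T] k ->
  cross_intersecting F G -> 'C(n - 2, k - 2) <= #|hat1 G| ->
  intersecting (H0 k F :|: H1 k G) /\
  (0 < #|bar1 F| -> 'C(n - 2, k - 2) < #|hat1 G| -> nontrivial (H0 k F :|: H1 k G)).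
Proof.
move=> k2 kn FK GK cFG hG.
have n1 : 1 < n by lia.
set X := ground2 n.
have cXn : #|X| = n.-1 by exact: cardX.
set A' := [set A :\ z | A in hat1 G].
have A'K : A' \subset ksets X k.-1.
  apply/subsetP => A1 /imsetP [A]; rewrite in_hat1 => /andP [AG zA] ->.
  move: (subsetP GK A AG); rewrite !inE => /andP [_ /eqP cA].
  apply/andP; split; first by apply/subsetP => x; rewrite in_setD1 inX => /andP [].
  by move: (cardsD1 z A); rewrite zA cA add1n => ->.
have cA' : #|A'| = #|hat1 G|.
  rewrite card_in_imset // => A1 A2; rewrite !in_hat1 => /andP [_ z1] /andP [_ z2] E.
  by rewrite -(setD1K z1) -(setD1K z2) E.
have B'K : bar1 F \subset ksets X k.
  apply/subsetP => B; rewrite in_bar1 => /andP [BF zB].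
  move: (subsetP FK B BF); rewrite !inE => /andP [_ ->]; rewrite andbT.
  apply/subsetP => x xB; rewrite inX; apply: contraNneq zB => <-; exact: xB.
have cr : cross_intersecting A' (bar1 F).
  move=> A1 B /imsetP [A]; rewrite in_hat1 => /andP [AG zA] -> ; rewrite in_bar1 => /andP [BF zB].
  have := cFG B A BF AG; rewrite setIC; apply: contraNneq => E.
  apply/eqP/setP => x; have := congr1 (fun S => x \in S) E; rewrite !inE /=.
  case xz : (x == z); last by [].
  by rewrite (eqP xz) (negbTE zB) !andbF.
have hil := hilton A'K B'K cr (_ : k.-1 + k <= #|X|).
rewrite cA' in hil.
have hil2 : cross_intersecting (lexfirst X k.-1 #|hat1 G|) (H0 k F) by apply: hil; lia.
have H0X : forall D, D \in H0 k F -> D \subset X /\ #|D| = k.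
  by move=> D; rewrite !inE => /andP [/andP [DX /eqP cD] _].
have H0w : forall D, D \in H0 k F -> w \in D.
  move=> D DH; have [DX cD] := H0X D DH; apply/negPn/negP => wD.
  set Y := (X :\: D) :\ w.
  have wXD : w \in X :\: D by rewrite inE wD inX eq_sym zw.
  have cY : #|Y| = n.-1 - k - 1.
    have c1 : #|X :\: D| = n.-1 - k by rewrite cardsD (setIidPr DX) cXn cD.
    move: (cardsD1 w (X :\: D)); rewrite wXD c1 -/Y /=.
    by move=> ->; rewrite addKn.
  have [R RY cR] := @subset_card _ Y (k - 2) (ltac:(lia)).
  have wR : w \notin R by apply/negP => /(subsetP RY); rewrite !inE eqxx.
  have RX : R \subset X by apply: subset_trans RY _; apply/subsetP => x; rewrite !inE => /and3P [].
  have SL : w |: R \in lexfirst X k.-1 #|hat1 G|.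
    have SK : w |: R \in ksets X k.-1.
      rewrite inE subUset sub1set inX eq_sym zw RX cardsU1 wR cR /=; apply/eqP; lia.
    rewrite inE SK /=; apply: leq_trans hG.
    apply: leq_trans (W1_card k2 n1).
    apply: pred_lt; first by rewrite inE SK setU11.
    move=> B BK lB; rewrite inE BK /=; apply: (lex_w (setU11 _ _) lB).
    move=> zB; move: BK; rewrite inE => /andP [/subsetP BX _].
    by move: (BX z zB); rewrite inX eqxx.
  case/negP: (hil2 _ _ SL DH); apply/eqP/setP => x; rewrite !inE.
  apply/negP => /andP [/orP [/eqP ->|xR] xD]; first by rewrite xD in wD.
  by move: (subsetP RY x xR); rewrite !inE xD andbF.
split.
  move=> C1 C2; rewrite !in_setU => /orP [h1|h1] /orP [h2|h2].
  - by apply/set0Pn; exists w; rewrite inE !H0w.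
  - have [zC2 L] := H1_prop GK (ltnW k2) h2.
    by rewrite setIC; apply: meet_sub (hil2 _ _ L h1) => //; apply: subsetDl.
  - have [zC1 L] := H1_prop GK (ltnW k2) h1.
    by apply: meet_sub (hil2 _ _ L h2) => //; apply: subsetDl.
  - have [zC1 _] := H1_prop GK (ltnW k2) h1; have [zC2 _] := H1_prop GK (ltnW k2) h2.
    by apply/set0Pn; exists z; rewrite inE zC1 zC2.
move=> bF hG'.
have cW2 := W2_card k2 n1.
have H1in : forall C, C \in ksets [set: T] k ->
    (forall B, B \in ksets [set: T] k -> lexlt B C -> (z \in B) && (w \in B)) ->
    C \in H1 k G.
  move=> C CK HC; rewrite inE CK /=; apply: leq_ltn_trans hG'.
  apply: leq_trans cW2; apply: pred_le => B BK lB; rewrite inE BK /=; exact: HC.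
apply/setP => x; rewrite in_set0; apply/negP => /bigcapP Hx.
case: (eqVneq x z) => [xz|xz].
  have [C0 C0K] : exists C0, C0 \in ksets X k.
    have [R RX cR] := @subset_card _ X k (ltac:(lia)).
    by exists R; rewrite inE RX cR eqxx.
  have [D DH] := lexfirst_ne bF C0K.
  have := Hx D; rewrite in_setU DH => /(_ isT); rewrite xz.
  by have [DX _] := H0X D DH; apply/negP; apply: XnotZ.
case: (eqVneq x w) => [xw|xw].
  pose W3 := [set C in ksets [set: T] k | (z \in C) && (w \notin C)].
  have [C0 C0W] : exists C0, C0 \in W3.
    have hc : k.-1 <= #|~: [set z; w]|.
      rewrite cardC' cards2 zw; lia.
    have [R RZ cR] := @subset_card _ (~: [set z; w]) k.-1 hc.
    have zR : z \notin R by apply/negP => /(subsetP RZ); rewrite !inE eqxx.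
    have wR : w \notin R by apply/negP => /(subsetP RZ); rewrite !inE eqxx orbT.
    exists (z |: R); rewrite /W3 !inE eqxx /= subsetT cardsU1 zR cR /= negb_or wR andbT (eq_sym w z) zw andbT; apply/eqP; lia.
  case: (arg_minnP lk C0W) => C CW Hmin.
  have CW' : C \in W3 by [].
  move: CW'; rewrite inE => /andP [CK /andP [zC wC]].
  have := Hx C; rewrite in_setU (H1in C CK) ?orbT => [/(_ isT)|]; first by rewrite xw (negbTE wC).
  move=> B BK lB; have zB := lex_z zC lB; rewrite zB /=.
  apply/negPn/negP => wB.
  have BW : B \in W3 by rewrite inE BK zB wB.
  by have := Hmin B BW; rewrite leqNgt (lk_lt lB).
have hc : k - 2 <= #|~: (x |: [set z; w])|.
  rewrite cardC' cardsU1 cards2 zw !inE negb_or xz xw /=; lia.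
have [R RZ cR] := @subset_card _ (~: (x |: [set z; w])) (k - 2) hc.
have zR : z \notin R by apply/negP => /(subsetP RZ); rewrite !inE eqxx orbT.
have wR : w \notin R by apply/negP => /(subsetP RZ); rewrite !inE eqxx !orbT.
have xR : x \notin R by apply/negP => /(subsetP RZ); rewrite !inE eqxx.
have SK : z |: (w |: R) \in ksets [set: T] k.
  rewrite inE subsetT cardsU1 cardsU1 !inE negb_or eq_sym zw zR wR cR /=.
  apply/eqP; lia.
have := Hx (z |: (w |: R)); rewrite in_setU (H1in _ SK) ?orbT => [/(_ isT)|].
  by rewrite !inE (negbTE xz) (negbTE xw) (negbTE xR).
move=> B BK lB; have zB := lex_z (setU11 _ _) lB; rewrite zB /=.
apply: (lex_w _ lB); first by rewrite !inE eqxx orbT.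
by move=> _; rewrite setU11.
Qed.

End Main.

Lemma bar_pos n (z : 'I_n) (hz : val z = 0) (F : {set {set 'I_n}}) :
  nontrivial F -> 0 < #|bar1 F|.
Proof.
move=> ntF; rewrite lt0n cards_eq0; apply/negP => /eqP b0.
move: ntF; rewrite /nontrivial => /setP /(_ z); rewrite in_set0 => /negbT /negP; apply.
apply/bigcapP => A AF; apply/negPn/negP => zA.
have : A \in bar1 F by rewrite (in_bar1 hz) AF zA.
by rewrite b0 inE.
Qed.

Theorem lemma2p3 (n k : nat) (F G : {set {set 'I_n}}) :
  4 <= 2 * k -> 2 * k < n ->
  F \subset ksets [set: 'I_n] k -> G \subset ksets [set: 'I_n] k ->
  nontrivial F -> nontrivial G -> cross_intersecting F G ->
  'C(n - 2, k - 2) <= #|hat1 F| -> 'C(n - 2, k - 2) <= #|hat1 G| ->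
  (intersecting (H0 k F :|: H1 k G) /\ intersecting (H1 k F :|: H0 k G)) /\
  ('C(n - 2, k - 2) < minn #|hat1 F| #|hat1 G| ->
     nontrivial (H0 k F :|: H1 k G) /\ nontrivial (H1 k F :|: H0 k G)).
Proof.
move=> k4 kn FK GK ntF ntG cFG hF hG.
have n0 : 0 < n by lia.
have n1 : 1 < n by lia.
have k2 : 2 <= k by lia.
pose z := Ordinal n0; pose w := Ordinal n1.
have hz : val z = 0 by [].
have hw : val w = 1 by [].
have cGF : cross_intersecting G F by move=> A B AG BF; rewrite setIC; apply: cFG.
have [i1 t1] := main_dir hz hw k2 kn FK GK cFG hG.
have [i2 t2] := main_dir hz hw k2 kn GK FK cGF hF.
split; first by split => //; rewrite setUC.
move=> hmin; split.
  apply: t1; first exact: (@bar_pos n z hz F ntF).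
  by apply: leq_trans hmin _; rewrite geq_minr.
rewrite setUC; apply: t2; first exact: (@bar_pos n z hz G ntG).
by apply: leq_trans hmin _; rewrite geq_minl.
Qed.
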